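(* Let $G$ be a modification order graph (mo-graph) and let $C_0 \xrightarrow{mo} C_1 \xrightarrow{mo} \cdots \xrightarrow{mo} C_n$ be a path in $G$ such that $CV_{C_0} \le CV_{C_1} \le \cdots \le CV_{C_n}$. If any new edge is added to $G$ using the procedures Merge, AddEdge and AddRMWEdge, then the updated clock vectors satisfy $CV'_{C_0} \le CV'_{C_1} \le \cdots \le CV'_{C_n}$, where $CV'_{C_i} := CV_{C_i}$ whenever $CV_{C_i}$ is not changed by the addition.
   Context: An execution is a sequence of events performed by threads. Each event $E$ has a thread id $t_E$ and a unique sequence number $s_E$ taken from a global counter that is incremented by one at every event, so sequence numbers strictly increase along the execution. A clock vector is a function from thread ids to natural numbers, with $(CV_1 \cup CV_2)(t) = \max(CV_1(t), CV_2(t))$ and $CV_1 \le CV_2$ iff $CV_1(t) \le CV_2(t)$ for all $t$. The mo-graph has one node for each atomic store or atomic read-modify-write (RMW) executed so far. Edges only connect nodes accessing the same memory location. Each node $X$ stores a thread id $X.tid$, a set $X.edges$ of successor nodes (its outgoing mo edges), a field $X.rmw$ (a node or null; an rmw edge from $X$ to $X.rmw$ indicates that RMW $X.rmw$ reads from $X$), and a clock vector $X.cv$, also written $CV_X$. When the node for a store $A$ is created, its clock vector is $\perp_{CV_A} = \lambda t.\ (s_A \text{ if } t = t_A \text{ else } 0)$. Edges are added only by the following procedures. Merge(dst, src): if $src.cv \le dst.cv$ return false; otherwise set $dst.cv := dst.cv \cup src.cv$ and return true. AddEdge(from, to): let mustAdd be true iff ($from.rmw = to$ or $from.tid = to.tid$).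 If $from.cv \le to.cv$ and not mustAdd, return. While $from.rmw \ne$ null: let $next := from.rmw$; if $next = to$ stop the loop; otherwise $from := next$. Add $to$ to $from.edges$. If Merge(to, from) returns true, then let $Q := \{to\}$ and while $Q$ is nonempty remove a node $node$ from $Q$ and for each $dst \in node.edges$, if Merge(dst, node) returns true add $dst$ to $Q$. AddRMWEdge(from, rmw): set $from.rmw := rmw$; for each $dst \in from.edges$ with $dst \ne rmw$ add $dst$ to $rmw.edges$; set $from.edges := \emptyset$; call AddEdge(from, rmw). A path $X \xrightarrow{mo} Y$ means $Y \in X.edges$. *)

(* Defs.v *)
From mathcomp Require Import all_boot.
Set Implicit Arguments. Unset Strict Implicit. Unset Printing Implicit Defensive.

Definition cvec := nat -> nat.
Definition cv_join (a b : cvec) : cvec := fun t => maxn (a t) (b t).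
Definition cv_le (a b : cvec) : Prop := forall t, a t <= b t.

(* The state of the mo-graph: for each node X, X.tid, X.edges, X.rmw, X.cv.
   Edge sets are finite sets represented by sequences (membership only). *)
Record mograph := MoGraph {
  g_tid   : nat -> nat;
  g_edges : nat -> seq nat;
  g_rmw   : nat -> option nat;
  g_cv    : nat -> cvec }.

Definition upd {T} (f : nat -> T) (x : nat) (v : T) : nat -> T :=
  fun y => if y == x then v else f y.

Definition set_cv (G : mograph) x c :=
  MoGraph (g_tid G) (g_edges G) (g_rmw G) (upd (g_cv G) x c).
Definition set_edges (G : mograph) x s :=
  MoGraph (g_tid G) (upd (g_edges G) x s) (g_rmw G) (g_cv G).
Definition set_rmw (G : mograph) x r :=
  MoGraph (g_tid G) (g_edges G) (upd (g_rmw G) x r) (g_cv G).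

Definition sadd (x : nat) (s : seq nat) := if x \in s then s else x :: s.
Definition sdel (x : nat) (s : seq nat) := [seq y <- s | y != x].

(* Merge(dst, src): G' is the new state, b the returned boolean. *)
Inductive merge (G : mograph) (dst src : nat) : mograph -> bool -> Prop :=
| merge_no : cv_le (g_cv G src) (g_cv G dst) -> merge G dst src G false
| merge_yes : ~ cv_le (g_cv G src) (g_cv G dst) ->
    merge G dst src
      (set_cv G dst (cv_join (g_cv G dst) (g_cv G src))) true.

(* "for each dst in node.edges: if Merge(dst, node) then add dst to Q" *)
Inductive prop_dsts : mograph -> seq nat -> nat -> seq nat ->
                      mograph -> seq nat -> Prop :=
| pd_nil G node Q : prop_dsts G [::] node Q G Q
| pd_cons G d ds node Q G1 b G' Q' :
    merge G d node G1 b ->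
    prop_dsts G1 ds node (if b then sadd d Q else Q) G' Q' ->
    prop_dsts G (d :: ds) node Q G' Q'.

(* "while Q is nonempty remove a node from Q and ..." *)
Inductive propagate : mograph -> seq nat -> mograph -> Prop :=
| prop_done G : propagate G [::] G
| prop_step G Q x G1 Q1 G' :
    x \in Q ->
    prop_dsts G (g_edges G x) x (sdel x Q) G1 Q1 ->
    propagate G1 Q1 G' ->
    propagate G Q G'.

(* "while from.rmw <> null: next := from.rmw; if next = to stop; else from := next"
   rmw_walk G from to r : the loop ends with from = r. *)
Inductive rmw_walk (G : mograph) : nat -> nat -> nat -> Prop :=
| rw_null x to : g_rmw G x = None -> rmw_walk G x to x
| rw_hit x to : g_rmw G x = Some to -> rmw_walk G x to x
| rw_next x y to r : g_rmw G x = Some y -> y <> to ->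
    rmw_walk G y to r -> rmw_walk G x to r.

Definition must_add (G : mograph) (from to : nat) : Prop :=
  g_rmw G from = Some to \/ g_tid G from = g_tid G to.

Inductive add_edge (G : mograph) (from to : nat) : mograph -> Prop :=
| ae_skip : cv_le (g_cv G from) (g_cv G to) -> ~ must_add G from to ->
    add_edge G from to G
| ae_go f G2 b G' :
    ~ (cv_le (g_cv G from) (g_cv G to) /\ ~ must_add G from to) ->
    rmw_walk G from to f ->
    merge (set_edges G f (sadd to (g_edges G f))) to f G2 b ->
    (if b then propagate G2 [:: to] G' else G' = G2) ->
    add_edge G from to G'.

Definition rmw_prep (G : mograph) (from rmw : nat) : mograph :=
  let G1 := set_rmw G from (Some rmw) in
  let G2 := set_edges G1 rmw
              (foldr sadd (g_edges G1 rmw)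
                 [seq d <- g_edges G1 from | d != rmw]) in
  set_edges G2 from [::].

Definition add_rmw_edge (G : mograph) (from rmw : nat) (G' : mograph) : Prop :=
  add_edge (rmw_prep G from rmw) from rmw G'.

Inductive mo_update (G G' : mograph) : Prop :=
| mu_edge from to : add_edge G from to G' -> mo_update G G'
| mu_rmw from rmw : add_rmw_edge G from rmw G' -> mo_update G G'.

(* Main.v *)
Require Import Defs.
From mathcomp Require Import all_boot.
Set Implicit Arguments. Unset Strict Implicit.

Lemma cvle_refl a : cv_le a a. Proof. by move=> t. Qed.
Lemma cvle_trans a b c : cv_le a b -> cv_le b c -> cv_le a c.
Proof. by move=> h1 h2 t; apply: leq_trans (h1 t) (h2 t). Qed.
Lemma cvle_joinl a b : cv_le a (cv_join a b).
Proof. by move=> t; rewrite /cv_join leq_maxl. Qed.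
Lemma cvle_joinr a b : cv_le b (cv_join a b).
Proof. by move=> t; rewrite /cv_join leq_maxr. Qed.

Lemma sadd_sub x y s : y \in s -> y \in sadd x s.
Proof. by rewrite /sadd; case: ifP => // _ h; rewrite inE h orbT. Qed.
Lemma sadd_in x s : x \in sadd x s.
Proof. by rewrite /sadd; case: ifP => // _; rewrite inE eqxx. Qed.
Lemma foldr_sadd_sub y t s : y \in t -> y \in foldr sadd t s.
Proof. elim: s => //= a s IH h; exact: sadd_sub (IH h). Qed.
Lemma foldr_sadd_in y t s : y \in s -> y \in foldr sadd t s.
Proof.
elim: s => //= a s IH; rewrite inE => /orP [/eqP ->|h]; first exact: sadd_in.
exact: sadd_sub (IH h).
Qed.

Lemma merge_prop G d s G1 b : Defs.merge G d s G1 b ->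
  [/\ g_edges G1 = g_edges G, cv_le (g_cv G1 s) (g_cv G1 d),
      (forall a, cv_le (g_cv G a) (g_cv G1 a)),
      (forall a, a <> d -> g_cv G1 a = g_cv G a) & (b = false -> G1 = G)].
Proof.
case=> [h|h].
  by split => // a; apply: cvle_refl.
have nds : s <> d by move=> e; apply: h; rewrite e; apply: cvle_refl.
split => //=.
- rewrite /upd eqxx; have /negbTE -> : s != d by apply/eqP.
  exact: cvle_joinr.
- move=> a; rewrite /upd; case: eqP => [->|_]; [exact: cvle_joinl|exact: cvle_refl].
- by move=> a nad; rewrite /upd; case: eqP.
Qed.

Lemma merge_true G d s G1 : Defs.merge G d s G1 true -> ~ cv_le (g_cv G s) (g_cv G d).
Proof. by move=> h; inversion h. Qed.

Inductive chain (R : nat -> nat -> Prop) : nat -> nat -> Prop :=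
| ch_refl x : chain R x x
| ch_step x y z : R x y -> chain R y z -> chain R x z.

Lemma chain_mono (R R' : nat -> nat -> Prop) x z :
  (forall a b, R a b -> R' a b) -> chain R x z -> chain R' x z.
Proof. move=> h; elim=> [y|a b c r _ IH]; [exact: ch_refl|exact: ch_step (h _ _ r) IH]. Qed.

Definition goodP G (Q : seq nat) a c :=
  c \in g_edges G a /\ (cv_le (g_cv G a) (g_cv G c) \/ a \in Q).
Definition goodD G (Q : seq nat) x (ds : seq nat) a c :=
  c \in g_edges G a /\
  (cv_le (g_cv G a) (g_cv G c) \/ a \in Q \/ (a = x /\ c \in ds)).

Lemma chain_cv G x z : chain (goodP G [::]) x z -> cv_le (g_cv G x) (g_cv G z).
Proof.
elim=> [y|a b c [_ [h|//]] _ IH]; [exact: cvle_refl|exact: cvle_trans h IH].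
Qed.

Lemma pd_lemma G ds x Q G' Q' : prop_dsts G ds x Q G' Q' ->
  forall a c, goodD G Q x ds a c -> goodD G' Q' x [::] a c.
Proof.
elim=> {G ds x Q G' Q'} [//|G d ds x Q G1 b G' Q' hm _ IH] a c [he hc].
apply: IH.
have [E hxd hmono hsame hfalse] := merge_prop hm.
have QQ : {subset Q <= if b then sadd d Q else Q}.
  by case: b {hm hfalse} => // y; apply: sadd_sub.
split; first by rewrite E.
case: hc => [h|[h|[ax]]].
- case: (eqVneq a d) => [ad|/eqP nad].
    case: b hm hfalse QQ => hm hfalse QQ.
      by right; left; rewrite ad sadd_in.
    by rewrite hfalse //; left.
  by left; rewrite hsame //; apply: cvle_trans h (hmono c).
- by right; left; apply: QQ.
- rewrite inE => /orP [/eqP cd|cds].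
    by left; rewrite ax cd.
  by right; right.
Qed.

Lemma prop_lemma G Q G' : propagate G Q G' ->
  forall a c, goodP G Q a c -> goodP G' [::] a c.
Proof.
elim=> {G Q G'} [//|G Q x G1 Q1 G' xQ hpd _ IH] a c [he hc].
apply: IH.
have := pd_lemma hpd (a := a) (c := c).
case=> [|he1 [h|[h|[_ //]]]]; [|by split => //; left|by split => //; right].
split => //; case: hc => [h|aQ]; first by left.
case: (eqVneq a x) => [ax|nax]; first by right; right; split => //; rewrite -ax.
by right; left; rewrite /sdel mem_filter nax.
Qed.

Theorem lemma1 (G G' : mograph) (n : nat) (C : nat -> nat) :
  (forall i, i < n -> C i.+1 \in g_edges G (C i)) ->
  (forall i, i < n -> cv_le (g_cv G (C i)) (g_cv G (C i.+1))) ->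
  mo_update G G' ->
  forall i, i < n -> cv_le (g_cv G' (C i)) (g_cv G' (C i.+1)).
Proof.
move=> hE hC hU i hi.
move: (hE i hi) (hC i hi); set X := C i; set Y := C i.+1 => eXY cXY.
case: hU => [from to|from rmw].
- case=> [_ _ //|f G2 b G'' _ _ hm hb].
  case: b hm hb => hm hb; last first.
    by have [_ _ _ _ /(_ erefl) eG] := merge_prop hm; rewrite hb eG.
  apply: chain_cv; apply: ch_step (ch_refl _ _).
  apply: (prop_lemma hb).
  have [E _ hmono hsame _] := merge_prop hm.
  split.
    rewrite E /= /upd; case: eqP => [e|_] //; subst; exact: sadd_sub.
  case: (eqVneq X to) => [->|/eqP nX]; first by right; rewrite inE.
  left; rewrite hsame //=; exact: cvle_trans cXY (hmono Y).
- rewrite /add_rmw_edge; set P := rmw_prep G from rmw.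
  have cvP : g_cv P = g_cv G by [].
  case=> [_ _|f G2 b G'' _ hw hm hb]; first by rewrite cvP.
  have hrmw : g_rmw P from = Some rmw by rewrite /= /upd eqxx.
  have ef : f = from.
    inversion hw; subst => //; rewrite hrmw in H; case: H => H; congruence.
  subst f.
  case: b hm hb => hm hb; last first.
    by have [_ _ _ _ /(_ erefl) eG] := merge_prop hm; rewrite hb eG.
  have nfr : from != rmw.
    apply/eqP=> efr; apply: (merge_true hm); rewrite efr; exact: cvle_refl.
  have [E hfr hmono hsame _] := merge_prop hm.
  apply: chain_cv; apply: (@chain_mono (goodP G2 [:: rmw])); first exact: (prop_lemma hb).
  have eP z : g_edges P z = if z == from then [::] else if z == rmw then
     foldr sadd (g_edges G rmw) [seq d <- g_edges G from | d != rmw]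
     else g_edges G z.
    by [].
  have eG2 z : g_edges G2 z = if z == from then sadd rmw [::] else g_edges P z.
    by rewrite E /= {1}/upd; case: eqP => // _; rewrite /upd eqxx.
  have gen : X <> rmw -> goodP G2 [:: rmw] X Y -> chain (goodP G2 [:: rmw]) X Y.
    by move=> _ h; apply: ch_step h (ch_refl _ _).
  case: (eqVneq X from) => [Xf|nXf].
    have r1 : goodP G2 [:: rmw] X rmw.
      split; first by rewrite eG2 Xf eqxx sadd_in.
      by left; rewrite Xf.
    case: (eqVneq Y rmw) => [->|nYr]; first exact: ch_step r1 (ch_refl _ _).
    apply: ch_step r1 (ch_step _ (ch_refl _ _)).
    split; last by right; rewrite inE.
    rewrite eG2 eq_sym (negbTE nfr) eP eq_sym (negbTE nfr) eqxx.
    by apply: foldr_sadd_in; rewrite mem_filter nYr -Xf.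
  apply: ch_step (ch_refl _ _).
  have eXY2 : Y \in g_edges G2 X.
    rewrite eG2 (negbTE nXf) eP (negbTE nXf).
    by case: eqP => [<-|//]; apply: foldr_sadd_sub.
  split => //.
  case: (eqVneq X rmw) => [->|/eqP nX]; first by right; rewrite inE.
  by left; rewrite hsame //=; apply: cvle_trans cXY (hmono Y).
Qed.
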